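(* Let $t$ be a $\mu$-term over the finite alphabet $X$ and let $(x_n,y_n)_n$ be a factorization sequence for $t$. Then each of the sequences $(x_n)_n$ and $(y_n)_n$ has a subsequence converging in $(\overline{\Omega}_X\mathsf S)^1$ to the value in $\overline{\Omega}_X\mathsf S$ of a $\mu$-term (the empty term being allowed), i.e. to a $\mu$-word over $\mathsf S$.
   Context: $X$ is a finite alphabet, $\mathsf S$ is the pseudovariety of all finite semigroups and $\overline{\Omega}_X\mathsf S$ is the free profinite semigroup on $X$; $(\overline{\Omega}_X\mathsf S)^1$ is it with an identity adjoined (the empty word). $\widehat{\mathbb N}$ is the profinite completion of $(\mathbb N,+)$, and for $\alpha\in\widehat{\mathbb N}$ the $\alpha$-power $x\mapsto x^\alpha$ is the usual continuous unary operation on profinite semigroups. $\mu$ denotes the implicit signature consisting of binary multiplication together with all unary operations $x\mapsto x^\alpha$ with $\alpha\in\widehat{\mathbb N}\setminus\mathbb N$. A $\mu$-term is an element of the free algebra on $X$ in this signature with associative multiplication (the empty term is allowed); its value in $\overline{\Omega}_X\mathsf S$ is denoted $[t]_{\mathsf S}$, and a $\mu$-word over $\mathsf S$ is such a value. For each $\alpha\in\widehat{\mathbb N}$ a sequence $(\mathrm{Approx}_n(\alpha))_n$ of natural numbers converging to $\alpha$ is fixed, constant if $\alpha$ is finite and strictly increasing otherwise. For a $\mu$-term $t$, $\mathrm{Approx}_n(t)$ is the finite word obtained by recursively replacing each subterm $v^\alpha$ ($\alpha$ infinite) by $v^{\mathrm{Approx}_n(\alpha)}$. A factorization sequence for $t$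 is a sequence $(x_n,y_n)_n$ with $x_n\in X^*$, $y_n\in X^+$ and $x_ny_n=\mathrm{Approx}_n(t)$ for all $n$. *)

(* Defs.v *)
From mathcomp Require Import all_boot.
Set Implicit Arguments. Unset Strict Implicit. Unset Printing Implicit Defensive.

Record fsemigroup := FSemigroup {
  fs_car :> finType;
  fs_op : fs_car -> fs_car -> fs_car;
  fs_assoc : associative fs_op }.

Record fmonoid := FMonoid {
  fm_car :> finType;
  fm_op : fm_car -> fm_car -> fm_car;
  fm_one : fm_car;
  fm_assoc : associative fm_op;
  fm_mul1 : left_id fm_one fm_op;
  fm_mulr1 : right_id fm_one fm_op }.

Definition shom (S T : fsemigroup) (h : S -> T) :=
  forall a b, h (fs_op a b) = fs_op (h a) (h b).
Definition mhom (M N : fmonoid) (h : M -> N) :=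
  h (fm_one M) = fm_one N /\ forall a b, h (fm_op a b) = fm_op (h a) (h b).

Fixpoint mpow (M : fmonoid) (g : M) (k : nat) : M :=
  if k is k'.+1 then fm_op g (mpow g k') else fm_one M.

(** * The profinite completion \hat N of (N,+):
    the projective limit of all finite images of (N,+), i.e. the families
    (a(M,g))_{M finite monoid, g in M} (g = image of 1) that are natural w.r.t.
    monoid homomorphisms. *)
Definition Nhat := { a : forall M : fmonoid, M -> M |
  forall (M N : fmonoid) (h : M -> N), mhom h -> forall g, h (a M g) = a N (h g) }.

Definition Nfinite (al : Nhat) := exists k : nat,
  forall (M : fmonoid) (g : M), sval al M g = mpow g k.

Definition Ninf := { al : Nhat | ~ Nfinite al }.

(** convergence in \hat N (projective-limit topology) of a sequence of naturals *)
Definition nat_conv (a : nat -> nat) (al : Nhat) : Prop :=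
  forall (M : fmonoid) (g : M), exists N, forall n, N <= n -> mpow g (a n) = sval al M g.

Definition approx_ok (A : Nhat -> nat -> nat) : Prop :=
  (forall al, nat_conv (A al) al) /\
  (forall al, Nfinite al -> forall n, A al n = A al 0) /\
  (forall al, ~ Nfinite al -> forall n, A al n < A al n.+1).

(** * The free profinite semigroup over X, as the projective limit of the
    X-generated finite semigroups: families (u(S,f))_{S finite, f : X -> S}
    natural w.r.t. semigroup homomorphisms. *)
Definition Omega (X : finType) := { u : forall S : fsemigroup, (X -> S) -> S |
  forall (S T : fsemigroup) (h : S -> T), shom h -> forall f, h (u S f) = u T (h \o f) }.

(** (Omega X)^1 : None is the adjoined identity (empty word). *)
Definition Omega1 (X : finType) := option (Omega X).

(** topology of (Omega X)^1 : the identity is isolated, Omega X has the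
    projective-limit (pointwise) topology. *)
Definition conv1 (X : finType) (v : nat -> Omega1 X) (u : Omega1 X) : Prop :=
  match u with
  | None => exists N, forall n, N <= n -> v n = None
  | Some u => (exists N, forall n, N <= n -> v n <> None) /\
      forall (S : fsemigroup) (f : X -> S), exists N, forall n, N <= n ->
        exists w, v n = Some w /\ sval w S f = sval u S f
  end.

Definition omul (S : fsemigroup) (a b : option S) : option S :=
  match a, b with
  | Some x, Some y => Some (fs_op x y)
  | None, _ => b
  | _, None => a
  end.

Lemma omulA (S : fsemigroup) : associative (@omul S).
Proof. by case=> [x|] [y|] [z|] //=; rewrite fs_assoc. Qed.
Lemma omul1 (S : fsemigroup) : left_id None (@omul S).
Proof. by case. Qed.
Lemma omulr1 (S : fsemigroup) : right_id None (@omul S).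
Proof. by case. Qed.

Definition S1 (S : fsemigroup) : fmonoid :=
  @FMonoid (option S) (@omul S) None (@omulA S) (@omul1 S) (@omulr1 S).

Lemma omap_mhom (S T : fsemigroup) (h : S -> T) :
  shom h -> @mhom (S1 S) (S1 T) (omap h).
Proof. move=> hh; split=> // [[a|] [b|]] //=; by rewrite hh. Qed.

(** * mu-terms.  Multiplication is a binary tree (values and approximations
    do not depend on bracketing); MOne is the empty term. *)
Inductive muterm (X : Type) :=
| MVar of X
| MOne
| MMul of muterm X & muterm X
| MPow of muterm X & Ninf.
Arguments MOne {X}.

(** value of a term in S^1 under an assignment X -> S; x^alpha is the
    usual alpha-power, i.e. alpha evaluated at the finite monoid S^1 *)
Fixpoint mueval (X : Type) (t : muterm X) (S : fsemigroup) (f : X -> S) : option S :=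
  match t with
  | MVar x => Some (f x)
  | MOne => None
  | MMul t1 t2 => omul (mueval t1 f) (mueval t2 f)
  | MPow t a => sval (sval a) (S1 S) (mueval t f)
  end.

Lemma mueval_nat (X : Type) (t : muterm X) (S T : fsemigroup) (h : S -> T) f :
  shom h -> mueval t (h \o f) = omap h (mueval t f).
Proof.
move=> hh; elim: t => [x| |t1 IH1 t2 IH2|t IH a] //=.
  by rewrite IH1 IH2; case: (mueval t1 f) => [?|]; case: (mueval t2 f) => [?|] //=; rewrite hh.
rewrite IH; case: a => [[al Hal] _] /=.
by rewrite (Hal (S1 S) (S1 T) (omap h) (omap_mhom hh)).
Qed.

Fixpoint firstletter (X : Type) (t : muterm X) : option X :=
  match t with
  | MVar x => Some x
  | MOne => None
  | MMul t1 t2 => if firstletter t1 is Some x then Some x else firstletter t2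
  | MPow t _ => firstletter t
  end.

(** For a term containing a letter x the value lies in Omega X (the default
    f x is never used since infinite powers of elements of S stay in S). *)
Lemma mufam_nat (X : finType) (t : muterm X) (x : X) :
  forall (S T : fsemigroup) (h : S -> T), shom h -> forall f,
  h ((fun (S : fsemigroup) (f : X -> S) => odflt (f x) (mueval t f)) S f) =
  (fun (S : fsemigroup) (f : X -> S) => odflt (f x) (mueval t f)) T (h \o f).
Proof. by move=> S T h hh f /=; rewrite mueval_nat //; case: (mueval t f). Qed.

Definition mufam (X : finType) (t : muterm X) (x : X) : Omega X :=
  exist _ (fun (S : fsemigroup) (f : X -> S) => odflt (f x) (mueval t f)) (@mufam_nat X t x).

Definition muval (X : finType) (t : muterm X) : Omega1 X :=
  if firstletter t is Some x then Some (mufam t x) else None.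

Lemma wfam_nat (X : finType) (x : X) (w : seq X) :
  forall (S T : fsemigroup) (h : S -> T), shom h -> forall f,
  h ((fun (S : fsemigroup) (f : X -> S) => foldl (@fs_op S) (f x) (map f w)) S f) =
  (fun (S : fsemigroup) (f : X -> S) => foldl (@fs_op S) (f x) (map f w)) T (h \o f).
Proof.
move=> S T h hh f /=; elim: w (f x) => [|y w IH] a //=.
by rewrite IH hh.
Qed.

Definition wfam (X : finType) (x : X) (w : seq X) : Omega X :=
  exist _ (fun (S : fsemigroup) (f : X -> S) => foldl (@fs_op S) (f x) (map f w)) (@wfam_nat X x w).

Definition wval (X : finType) (w : seq X) : Omega1 X :=
  if w is x :: w' then Some (wfam x w') else None.

Fixpoint approx (X : Type) (A : Nhat -> nat -> nat) (n : nat) (t : muterm X) : seq X :=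
  match t with
  | MVar x => [:: x]
  | MOne => [::]
  | MMul t1 t2 => approx A n t1 ++ approx A n t2
  | MPow t a => flatten (nseq (A (sval a) n) (approx A n t))
  end.

Definition factorization_seq (X : Type) (A : Nhat -> nat -> nat) (t : muterm X)
  (x y : nat -> seq X) : Prop :=
  forall n, y n <> [::] /\ x n ++ y n = approx A n t.

Definition subseq_conv_muword (X : finType) (z : nat -> seq X) : Prop :=
  exists phi : nat -> nat, (forall n, phi n < phi n.+1) /\
  exists t' : muterm X, conv1 (fun n => wval (z (phi n))) (muval t').

(* Main.v *)
Require Import Defs.
From mathcomp Require Import all_boot.
From mathcomp Require Import zify.
From Stdlib Require Import Classical ClassicalEpsilon.
Set Implicit Arguments. Unset Strict Implicit. Unset Printing Implicit Defensive.

Definition incr (s : nat -> nat) := forall n, s n < s n.+1.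
Definition ev (P : nat -> Prop) := exists N, forall n, N <= n -> P n.

Lemma incr_mono s : incr s -> forall a b, a < b -> s a < s b.
Proof.
move=> hs a b; elim: b => // b IH; rewrite ltnS leq_eqVlt => /orP[/eqP->|/IH h].
  exact: hs.
exact: ltn_trans h (hs b).
Qed.

Lemma incr_ge s : incr s -> forall n, n <= s n.
Proof. move=> hs; elim=> // n IH; exact: leq_ltn_trans IH (hs n). Qed.

Lemma incr_comp s t : incr s -> incr t -> incr (fun n => s (t n)).
Proof. move=> hs ht n; exact: incr_mono (ht n). Qed.

Lemma ev_sub P s : incr s -> ev P -> ev (fun n => P (s n)).
Proof.
move=> hs [N HN]; exists N => n hn; apply HN; exact: leq_trans hn (incr_ge hs n).
Qed.

Lemma ev_and (P Q : nat -> Prop) : ev P -> ev Q -> ev (fun n => P n /\ Q n).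
Proof.
move=> [N1 H1] [N2 H2]; exists (maxn N1 N2) => n; rewrite geq_max => /andP[a b]; split; auto.
Qed.

Lemma choice_seq (T : Type) (R : nat -> T -> Prop) :
  (forall n, exists r, R n r) -> exists g, forall n, R n (g n).
Proof.
move=> H; exists (fun n => proj1_sig (constructive_indefinite_description _ (H n))).
move=> n; exact: proj2_sig (constructive_indefinite_description _ (H n)).
Qed.

Lemma inf_sub (P : nat -> Prop) :
  (forall N, exists n, N <= n /\ P n) -> exists s, incr s /\ forall n, P (s n).
Proof.
move=> H; have [g Hg] := choice_seq H.
pose s := fix s n := if n is n'.+1 then g (s n').+1 else g 0.
exists s; split=> [n|[|n]] /=; [exact: (Hg _).1 | exact: (Hg 0).2 | exact: (Hg _).2].
Qed.

Lemma inf_or (P Q : nat -> Prop) : (forall n, P n \/ Q n) ->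
  (exists s, incr s /\ forall n, P (s n)) \/ (exists s, incr s /\ forall n, Q (s n)).
Proof.
move=> H; case: (classic (forall N, exists n, N <= n /\ P n)) => [h|h].
  by left; apply: inf_sub.
right; apply: inf_sub => N.
have [N0 HN0] : exists N0, forall n, N0 <= n -> ~ P n.
  apply: NNPP => h2; apply: h => M; apply: NNPP => h3; apply: h2; exists M => n hn e.
  by apply: h3; exists n.
exists (maxn N N0); split; first exact: leq_maxl.
by case: (H (maxn N N0)) => // /HN0; rewrite leq_maxr => /(_ isT).
Qed.

Lemma pigeon B (c : nat -> nat) : (forall n, c n < B) ->
  exists s v, incr s /\ forall n, c (s n) = v.
Proof.
elim: B c => [|B IH] c hc; first by have := hc 0.
case: (classic (forall N, exists n, N <= n /\ c n = B)) => [h|h].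
  have [s [hs hs']] := inf_sub h; by exists s, B.
have [N HN] : exists N, forall n, N <= n -> c n <> B.
  apply: NNPP => h2; apply: h => N; apply: NNPP => h3; apply: h2; exists N => n hn e.
  by apply: h3; exists n.
have hc' : forall n, c (n + N) < B.
  move=> n; have := hc (n + N); rewrite ltnS leq_eqVlt => /orP[/eqP e|//].
  by case: (HN (n + N) (leq_addl _ _)).
have [s [v [hs hs']]] := IH _ hc'.
by exists (fun n => s n + N), v; split=> [n|n] /=; [rewrite ltn_add2r | exact: hs'].
Qed.

Lemma mpowD (M : fmonoid) (g : M) a b : mpow g (a + b) = fm_op (mpow g a) (mpow g b).
Proof.
elim: a => [|a IH] /=; first by rewrite fm_mul1.
by rewrite IH fm_assoc.
Qed.

Lemma mpow_hom (M N : fmonoid) (h : M -> N) (g : M) k : mhom h -> h (mpow g k) = mpow (h g) k.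
Proof. move=> [h1 hm]; elim: k => [|k IH] //=; by rewrite hm IH. Qed.

Lemma mpow_cycle (M : fmonoid) (g : M) :
  exists i p, 0 < p /\ i + p <= #|M| /\ mpow g i = mpow g (i + p).
Proof.
pose f (j : 'I_#|M|.+1) := mpow g j.
have : ~~ injectiveb f.
  apply/negP => /injectiveP /leq_card; by rewrite card_ord ltnn.
move=> /injectivePn [a [b ne e]].
have [j1 [j2 [lt e']]] : exists j1 j2 : 'I_#|M|.+1, j1 < j2 /\ f j1 = f j2.
  case: (ltngtP a b) => h; [by exists a, b | by exists b, a | ].
  by move: ne; rewrite -(inj_eq val_inj) /= h eqxx.
rewrite /f in e'.
exists j1, (j2 - j1); split; first by rewrite subn_gt0.
split; first by have := ltn_ord j2; lia.
by rewrite subnKC ?(ltnW lt).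
Qed.

Lemma arith1 i d p q : i + d + (p + q) = i + (d + q) + p.
Proof. lia. Qed.

Lemma mpow_eq (M : fmonoid) (g : M) k k' :
  minn k #|M| = minn k' #|M| -> k %% #|M|`! = k' %% #|M|`! -> mpow g k = mpow g k'.
Proof.
move=> e1 e2.
have [i [p [p0 [ip e]]]] := mpow_cycle g.
have per1 : forall d, mpow g (i + d) = mpow g (i + d + p).
  by move=> d; rewrite [i + d + p]addnAC [i + p + d]addnC [i + d]addnC (mpowD g d i) (mpowD g d (i + p)) e.
have per : forall c d, mpow g (i + d) = mpow g (i + d + c * p).
  elim=> [|c IH] d; first by rewrite addn0.
  have -> : i + d + c.+1 * p = i + (d + c * p) + p by rewrite mulSn; apply: arith1.
  by rewrite -per1 addnA; exact: IH.
case: (ltnP k #|M|) => hk.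
  have -> : k = k'; last by [].
  move: e1 hk; clear; case: (ltnP k' #|M|) => h; rewrite /minn ?h; case: ifP => //; lia.
case: (ltnP k' #|M|) => hk'.
  have -> : k = k'; last by [].
  move: e1 hk hk'; clear; rewrite /minn; case: ifP; case: ifP; lia.
have pd : p %| #|M|`! by apply: dvdn_fact; rewrite p0 /=; exact: leq_trans (leq_addl i p) ip.
have e3 : k %% p = k' %% p by rewrite -(modn_dvdm k pd) -(modn_dvdm k' pd) e2.
wlog le : k k' e1 e2 hk hk' e3 / k <= k'.
  move=> W; case: (leqP k k') => h; first exact: W.
  by apply/esym/W => //; apply: ltnW.
have : p %| k' - k by rewrite -eqn_mod_dvd // e3.
move=> /divnK dk.
have ik : i <= k := leq_trans (leq_trans (leq_addr p i) ip) hk.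
have -> : k' = i + (k - i) + (k' - k) %/ p * p by rewrite dk subnKC // subnKC.
by rewrite -per subnKC.
Qed.
Lemma step (u : nat -> nat) N : exists tau, incr tau /\ forall n,
  minn (u (tau n)) N = minn (u (tau 0)) N /\ u (tau n) %% N`! = u (tau 0) %% N`!.
Proof.
have [s1 [v1 [hs1 H1]]] := @pigeon N.+1 (fun n => minn (u n) N) (fun n => leq_ltn_trans (geq_minr _ _) (ltnSn N)).
have [s2 [v2 [hs2 H2]]] := @pigeon N`! (fun n => u (s1 n) %% N`!) (fun n => ltn_pmod _ (fact_gt0 N)).
exists (fun n => s1 (s2 n)); split; first exact: incr_comp.
by move=> n; rewrite !H1 !H2.
Qed.

Section Compact.
Variable k : nat -> nat.

Definition Fst (u : nat -> nat) N : nat -> nat :=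
  proj1_sig (constructive_indefinite_description _ (step u N)).
Lemma Fst_spec u N : incr (Fst u N) /\ forall n,
  minn (u (Fst u N n)) N = minn (u (Fst u N 0)) N /\ u (Fst u N n) %% N`! = u (Fst u N 0) %% N`!.
Proof. exact: proj2_sig (constructive_indefinite_description _ (step u N)). Qed.

Fixpoint sq (N : nat) : nat -> nat :=
  if N is N'.+1 then (fun n => sq N' (Fst (fun j => k (sq N' j)) N'.+1 n)) else Fst k 0.

Lemma sq_incr N : incr (sq N).
Proof. elim: N => [|N IH] /=; first exact: (Fst_spec _ _).1. exact: incr_comp IH (Fst_spec _ _).1. Qed.

Lemma sq_const N n : minn (k (sq N n)) N = minn (k (sq N 0)) N /\
   k (sq N n) %% N`! = k (sq N 0) %% N`!.
Proof. case: N => [|N] /=; [exact: (Fst_spec k 0).2 | exact: (Fst_spec (fun j => k (sq N j)) N.+1).2]. Qed.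

Lemma sq_refine N M : N <= M -> exists tau, forall n, sq M n = sq N (tau n).
Proof.
elim: M => [|M IH]; first by rewrite leqn0 => /eqP->; exists id.
rewrite leq_eqVlt => /orP[/eqP->|]; first by exists id.
rewrite ltnS => /IH [tau Ht]; exists (fun n => tau (Fst (fun j => k (sq M j)) M.+1 n)).
by move=> n /=; rewrite Ht.
Qed.

Definition diag n := sq n n.

Lemma diag_incr : incr diag.
Proof.
move=> n; rewrite /diag /=.
apply: incr_mono; first exact: sq_incr.
exact: leq_trans (ltnSn n) (incr_ge (Fst_spec _ _).1 n.+1).
Qed.

Lemma diag_const N n : N <= n -> minn (k (diag n)) N = minn (k (sq N 0)) N /\
   k (diag n) %% N`! = k (sq N 0) %% N`!.
Proof. move=> /sq_refine [tau Ht]; rewrite /diag Ht; exact: sq_const. Qed.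

Definition lim_fam : forall M : fmonoid, M -> M := fun M g => mpow g (k (sq #|M| 0)).

Lemma lim_conv (M : fmonoid) (g : M) n : #|M| <= n -> mpow g (k (diag n)) = lim_fam g.
Proof. move=> /diag_const [h1 h2]; exact: mpow_eq. Qed.

Lemma lim_nat : forall (M N : fmonoid) (h : M -> N), mhom h -> forall g, h (lim_fam g) = lim_fam (h g).
Proof.
move=> M N h hh g; rewrite -(lim_conv g (leq_maxl #|M| #|N|)) mpow_hom //.
exact: lim_conv (leq_maxr _ _).
Qed.

Definition lim_el : Nhat := exist _ lim_fam lim_nat.

Lemma compact_k : nat_conv (fun n => k (diag n)) lim_el.
Proof. move=> M g; exists #|M| => n hn /=; exact: lim_conv. Qed.
End Compact.

Lemma compact (k : nat -> nat) : exists s b, incr s /\ nat_conv (fun n => k (s n)) b.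
Proof. exists (diag k), (lim_el k); split; [exact: diag_incr | exact: compact_k]. Qed.

Lemma nat_conv_sub a b s : incr s -> nat_conv a b -> nat_conv (fun n => a (s n)) b.
Proof. move=> hs H M g; exact: ev_sub hs (H M g). Qed.
Definition weval (X : Type) (S : fsemigroup) (f : X -> S) (w : seq X) : option S :=
  foldr (fun a acc => omul (Some (f a)) acc) None w.

Lemma weval_cat (X : Type) (S : fsemigroup) (f : X -> S) u v :
  weval f (u ++ v) = omul (weval f u) (weval f v).
Proof.
elim: u => [|a u IH]; first by [].
change (omul (Some (f a)) (weval f (u ++ v)) = omul (omul (Some (f a)) (weval f u)) (weval f v)).
by rewrite IH omulA.
Qed.

Lemma weval_flat (X : Type) (S : fsemigroup) (f : X -> S) w k :
  weval f (flatten (nseq k w)) = @mpow (S1 S) (weval f w) k.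
Proof. elim: k => [|k IH] //=; by rewrite weval_cat IH. Qed.

Lemma weval_cons_aux (X : Type) (S : fsemigroup) (f : X -> S) w (a : S) :
  omul (Some a) (weval f w) = Some (foldl (@fs_op S) a (map f w)).
Proof.
elim: w a => [|b w IH] a //.
change (omul (Some a) (omul (Some (f b)) (weval f w)) = Some (foldl (@fs_op S) (fs_op a (f b)) (map f w))).
by rewrite omulA -IH.
Qed.

Lemma weval_cons (X : Type) (S : fsemigroup) (f : X -> S) y w :
  weval f (y :: w) = Some (foldl (@fs_op S) (f y) (map f w)).
Proof. exact: weval_cons_aux. Qed.

Lemma unit_assoc : associative (fun _ _ : unit => tt). Proof. by []. Qed.
Definition unitS : fsemigroup := @FSemigroup unit (fun _ _ => tt) unit_assoc.
Lemma unit_l : left_id tt (fun _ _ : unit => tt). Proof. by case. Qed.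
Lemma unit_r : right_id tt (fun _ _ : unit => tt). Proof. by case. Qed.
Definition unitM : fmonoid := @FMonoid unit (fun _ _ => tt) tt unit_assoc unit_l unit_r.
Definition boolM : fmonoid := @FMonoid bool orb false orbA orFb orbF.

Lemma isSome_mhom (S : fsemigroup) : @mhom (S1 S) boolM (@isSome S).
Proof. by split=> // [[a|] [b|]]. Qed.

Definition semi_of (M : fmonoid) : fsemigroup := @FSemigroup M (@fm_op M) (@fm_assoc M).

Lemma chi_mhom (M : fmonoid) :
  @mhom (S1 (semi_of M)) M (fun o => if o is Some m then m else fm_one M).
Proof.
split=> // [[a|] [b|]] /=; by rewrite ?fm_mul1 ?fm_mulr1.
Qed.

Lemma alpha_some (al : Nhat) (S : fsemigroup) (o : option S) : ~ Nfinite al ->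
  isSome (sval al (S1 S) o) = isSome o.
Proof.
move=> nf; case: o => [s|] /=.
  apply: negbNE; apply/negP => hn; apply: nf; exists 0 => M g /=.
  have hB : sval al boolM true = false.
    by rewrite -[true]/(isSome (Some s)) -(proj2_sig al _ _ _ (isSome_mhom S)); apply: negbTE.
  have hT : sval al (S1 (semi_of M)) (Some g) = None.
    move: (proj2_sig al _ _ _ (isSome_mhom (semi_of M)) (Some g)) => /=; rewrite hB.
    by case: (sval al (S1 (semi_of M)) (Some g)).
  have := proj2_sig al _ _ _ (chi_mhom M) (Some g); by rewrite hT /=.
have hh : @mhom unitM (S1 S) (fun _ => None) by split.
by rewrite -(proj2_sig al _ _ _ hh tt).
Qed.

Section Main.
Variable X : finType.

Lemma mueval_some (t : muterm X) (S : fsemigroup) (f : X -> S) :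
  isSome (mueval t f) = isSome (firstletter t).
Proof.
elim: t => [x| |t1 IH1 t2 IH2|t IH a] //=.
  move: IH1 IH2; case: (mueval t1 f) => [?|]; case: (mueval t2 f) => [?|];
  case: (firstletter t1) => [?|]; case: (firstletter t2) => [?|] //=.
by rewrite alpha_some ?IH //; exact: (proj2_sig a).
Qed.

Definition conv (z : nat -> seq X) (t : muterm X) :=
  forall (S : fsemigroup) (f : X -> S), ev (fun n => weval f (z n) = mueval t f).

Lemma conv_ext z z' t : (forall n, z n = z' n) -> conv z t -> conv z' t.
Proof. move=> E H S f; have [N HN] := H S f; exists N => n hn; rewrite -E; exact: HN. Qed.

Lemma conv_sub z t s : incr s -> conv z t -> conv (fun n => z (s n)) t.
Proof. move=> hs H S f; exact: ev_sub hs (H S f). Qed.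

Lemma conv_cat z1 z2 t1 t2 : conv z1 t1 -> conv z2 t2 ->
  conv (fun n => z1 n ++ z2 n) (MMul t1 t2).
Proof.
move=> H1 H2 S f; have [N HN] := ev_and (H1 S f) (H2 S f).
exists N => n /HN [e1 e2]; by rewrite weval_cat e1 e2.
Qed.

Fixpoint wterm (w : seq X) : muterm X :=
  if w is a :: w' then MMul (MVar a) (wterm w') else MOne.

Lemma wterm_ev (S : fsemigroup) (f : X -> S) w : mueval (wterm w) f = weval f w.
Proof. by elim: w => [|a w IH] //=; rewrite IH. Qed.

Lemma conv_const z w : (forall n, z n = w) -> conv z (wterm w).
Proof. move=> E S f; exists 0 => n _; by rewrite E wterm_ev. Qed.

Fixpoint tpow (t : muterm X) k : muterm X :=
  if k is k'.+1 then MMul t (tpow t k') else MOne.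

Lemma tpow_ev (S : fsemigroup) (f : X -> S) t k : mueval (tpow t k) f = @mpow (S1 S) (mueval t f) k.
Proof. by elim: k => [|k IH] //=; rewrite IH. Qed.

Lemma powterm (t : muterm X) (b : Nhat) : exists T, forall (S : fsemigroup) (f : X -> S),
  mueval T f = sval b (S1 S) (mueval t f).
Proof.
case: (classic (Nfinite b)) => [[k Hk]|nf].
  by exists (tpow t k) => S f; rewrite tpow_ev Hk.
by exists (MPow t (exist _ b nf)).
Qed.

Variable A : Nhat -> nat -> nat.
Hypothesis HA : approx_ok A.

Lemma approx_conv (t : muterm X) m : incr m -> conv (fun n => approx A (m n) t) t.
Proof.
move=> hm; elim: t => [x| |t1 IH1 t2 IH2|t IH a] S f /=.
- by exists 0.
- by exists 0.
- have [N HN] := ev_and (IH1 S f) (IH2 S f).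
  exists N => n /HN [e1 e2]; by rewrite weval_cat e1 e2.
- have [N HN] := ev_and (IH S f) (ev_sub hm (HA.1 (sval a) (S1 S) (mueval t f))).
  by exists N => n /HN [e1 e2]; rewrite weval_flat e1 e2.
Qed.

Lemma conv_pow (t T : muterm X) M I b : incr M -> nat_conv I b ->
  (forall (S : fsemigroup) (f : X -> S), mueval T f = sval b (S1 S) (mueval t f)) ->
  conv (fun n => flatten (nseq (I n) (approx A (M n) t))) T.
Proof.
move=> hM HI HT S f.
have [N HN] := ev_and (approx_conv t hM f) (HI (S1 S) (mueval t f)).
by exists N => n /HN [e1 e2]; rewrite weval_flat e1 e2 HT.
Qed.

Lemma cat_split (a b c d : seq X) : a ++ b = c ++ d ->
  (exists r, c = a ++ r /\ b = r ++ d) \/ (exists r, a = c ++ r /\ d = r ++ b).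
Proof.
elim: a c => [|x a IH] [|y c] /= E.
- by left; exists [::].
- by left; exists (y :: c).
- by right; exists (x :: a).
- case: E => -> /IH [[r [-> ->]]|[r [-> ->]]]; [left | right]; by exists r.
Qed.

Lemma pow_split (w : seq X) k (x y : seq X) : 0 < k -> x ++ y = flatten (nseq k w) ->
  exists i j p s, p ++ s = w /\ x = flatten (nseq i w) ++ p /\ y = s ++ flatten (nseq j w).
Proof.
elim: k x y => [//|k IH] x y _.
case: k IH => [|k] IH E.
  exists 0, 0, x, y; rewrite /= cats0 in E; by rewrite /= cats0.
move: E; rewrite [flatten _]/= => /cat_split [[r [-> ->]]|[r [-> E]]].
  by exists 0, k.+1, x, r.
have [i [j [p [s [e1 [e2 e3]]]]]] := IH r y isT (esym E).
by exists i.+1, j, p, s; rewrite e2 /= catA.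
Qed.

Lemma main (t : muterm X) : forall m, incr m -> forall x y : nat -> seq X,
  (forall n, x n ++ y n = approx A (m n) t) ->
  exists s, incr s /\ exists t1 t2, conv (fun n => x (s n)) t1 /\ conv (fun n => y (s n)) t2.
Proof.
elim: t => [a| |t1 IH1 t2 IH2|t IH a] m hm x y E.
- have H n : (x n = [::] /\ y n = [:: a]) \/ (x n = [:: a] /\ y n = [::]).
    move: (E n) => /=; case: (x n) => [|b [|c w]] /=; first by left.
      by case: (y n) => // -[->]; right.
    by case.
  case: (inf_or H) => [[s [hs Hs]]|[s [hs Hs]]]; exists s; split => //.
    exists (wterm [::]), (wterm [:: a]); split; apply: conv_const => n; apply (Hs n).
  exists (wterm [:: a]), (wterm [::]); split; apply: conv_const => n; apply (Hs n).
- exists id; split; first by [].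
  exists MOne, MOne; split => S f; exists 0 => n _ /=; move: (E n) => /=;
    by case: (x n); case: (y n).
- have H n : (exists r, approx A (m n) t1 = x n ++ r /\ y n = r ++ approx A (m n) t2) \/
      (exists r, x n = approx A (m n) t1 ++ r /\ approx A (m n) t2 = r ++ y n).
    by apply: cat_split; exact: (E n).
  case: (inf_or H) => [[s [hs Hs]]|[s [hs Hs]]].
  + have [r Hr] := choice_seq Hs.
    have [s2 [hs2 [p [q [Cp Cq]]]]] := IH1 _ (incr_comp hm hs) (fun n => x (s n)) r
      (fun n => esym (Hr n).1).
    exists (fun n => s (s2 n)); split; first exact: incr_comp.
    exists p, (MMul q t2); split; first exact: Cp.
    apply: conv_ext (conv_cat Cq (approx_conv t2 (incr_comp (incr_comp hm hs) hs2))).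
    by move=> n /=; rewrite (Hr _).2.
  + have [r Hr] := choice_seq Hs.
    have [s2 [hs2 [p [q [Cp Cq]]]]] := IH2 _ (incr_comp hm hs) r (fun n => y (s n))
      (fun n => esym (Hr n).2).
    exists (fun n => s (s2 n)); split; first exact: incr_comp.
    exists (MMul t1 p), q; split; last exact: Cq.
    apply: conv_ext (conv_cat (approx_conv t1 (incr_comp (incr_comp hm hs) hs2)) Cp).
    by move=> n /=; rewrite (Hr _).1.
- set al := sval a.
  have hA : incr (A al) := HA.2.2 al (proj2_sig a).
  pose m' n := m n.+1.
  have hm' : incr m' by move=> n; exact: hm.
  have K n : 0 < A al (m' n).
    exact: leq_trans (leq_trans (incr_ge hm n.+1) (incr_ge hA _)).
  have H0 n : exists i j p s, p ++ s = approx A (m' n) t /\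
      x n.+1 = flatten (nseq i (approx A (m' n) t)) ++ p /\
      y n.+1 = s ++ flatten (nseq j (approx A (m' n) t)).
    by apply: pow_split (K n) _; exact: (E n.+1).
  have [I HI] := choice_seq H0.
  have [J HJ] := choice_seq HI.
  have [P HP] := choice_seq HJ.
  have [Sf HS] := choice_seq HP.
  have [s1 [b [hs1 Cb]]] := compact I.
  have [s2 [c [hs2 Cc]]] := compact (fun n => J (s1 n)).
  have hu : incr (fun n => s1 (s2 n)) by exact: incr_comp.
  have [s3 [hs3 [tP [tQ [Cp Cq]]]]] := IH _ (incr_comp hm' hu) (fun n => P (s1 (s2 n)))
     (fun n => Sf (s1 (s2 n))) (fun n => (HS _).1).
  have [TB HTB] := powterm t b.
  have [TC HTC] := powterm t c.
  have hv : incr (fun n => s1 (s2 (s3 n))) := incr_comp hu hs3.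
  exists (fun n => (s1 (s2 (s3 n))).+1); split; first by move=> n; exact: hv.
  exists (MMul TB tP), (MMul tQ TC); split.
    apply: conv_ext (conv_cat (conv_pow (incr_comp hm' hv)
      (nat_conv_sub (incr_comp hs2 hs3) Cb) HTB) Cp).
    by move=> n /=; rewrite (HS _).2.1.
  apply: conv_ext (conv_cat Cq (conv_pow (incr_comp hm' hv)
      (nat_conv_sub hs3 Cc) HTC)).
  by move=> n /=; rewrite (HS _).2.2.
Qed.

Lemma conv_conv1 (z : nat -> seq X) t : conv z t -> conv1 (fun n => wval (z n)) (muval t).
Proof.
move=> C; rewrite /muval.
have hs := mueval_some t (fun _ : X => tt : unitS).
case E: (firstletter t) hs => [x0|] hs /=.
  split.
    have [N HN] := C unitS (fun _ => tt).
    exists N => n /HN; case: (z n) => //= e; by rewrite -e in hs.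
  move=> S f; have [N HN] := C S f; exists N => n /HN.
  have := mueval_some t f; rewrite E.
  case: (z n) => [|y w]; first by move=> h e; rewrite -e /= in h.
  move=> _ e; exists (wfam y w); split => //=.
  by rewrite weval_cons in e; rewrite -e.
have [N HN] := C unitS (fun _ => tt).
exists N => n /HN; case: (z n) => // y w.
by rewrite weval_cons; case: (mueval t _) hs.
Qed.

End Main.

Theorem lemma2p1 (X : finType) (A : Nhat -> nat -> nat) (HA : approx_ok A)
  (t : muterm X) (x y : nat -> seq X) (Hfs : factorization_seq A t x y) :
  subseq_conv_muword x /\ subseq_conv_muword y.
Proof.
have [s [hs [t1 [t2 [C1 C2]]]]] := main HA (m := id) (fun n => ltnSn n) (fun n => (Hfs n).2).
split; exists s; split => //; [exists t1 | exists t2]; exact: conv_conv1.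
Qed.
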